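(* Let $q$ be a prime power and $f:\mathbb{F}_q\to\mathbb{F}_q$ be differentially $d$-uniform. Then \[\sum_{r=1}^{d} r(d+1-r)M_r(f)\geq d \qquad (1)\] and \[\sum_{r=1}^{d+1} r(d+2-r)M_r(f)\geq q+d. \qquad (2)\] Equality holds in (1) if and only if $N(f)=(d+1)q-d$ and $M_r(f)=0$ for all $r\geq d+2$. Equality holds in (2) if and only if $N(f)=(d+1)q-d$ and $M_r(f)=0$ for all $r>d+2$; in that case \[\sum_{r=1}^{d} r(d+1-r)M_r(f)=(d+2)M_{d+2}(f)+d.\]
   Context: A map $f:\mathbb{F}_q\to\mathbb{F}_q$ is called differentially $d$-uniform ($d$-uniform) if $d=\max_{a\neq 0,\,b\in\mathbb{F}_q}|\{x\in\mathbb{F}_q: f(x+a)-f(x)=b\}|$. For $r\geq 1$, $M_r(f)$ denotes the number of $y\in\mathbb{F}_q$ with exactly $r$ preimages under $f$. $N(f)$ denotes the number of pairs $(x,y)\in\mathbb{F}_q^2$ with $f(x)=f(y)$. *)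

(* Defs.v *)
From HB Require Import structures.
From mathcomp Require Import all_boot all_order all_algebra.
Set Implicit Arguments. Unset Strict Implicit. Unset Printing Implicit Defensive.
Import GRing.Theory.
Local Open Scope ring_scope.

Definition diff_unif (F : finFieldType) (f : F -> F) : nat :=
  \max_(a : F | a != 0%R) \max_(b : F) #|[set x : F | (f (x + a) - f x)%R == b]|.

Definition Mr (F : finFieldType) (f : F -> F) (r : nat) : nat :=
  #|[set y : F | #|[set x : F | f x == y]| == r]|.

Definition Nf (F : finFieldType) (f : F -> F) : nat :=
  #|[set p : F * F | f p.1 == f p.2]|.

(* Main.v *)
Require Import Defs.
From mathcomp Require Import all_boot all_order all_algebra.
From mathcomp Require Import zify.
Set Implicit Arguments. Unset Strict Implicit. Unset Printing Implicit Defensive.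

Lemma cardsum (T : finType) (P : pred T) : #|[set x | P x]| = \sum_x (P x : nat).
Proof.
rewrite -sum1_card big_mkcond /=; apply eq_bigr => x _; rewrite inE; by case: (P x).
Qed.

Lemma sum_fib (A B : finType) (f : A -> B) (g : B -> nat) :
  \sum_x g (f x) = \sum_y #|[set x | f x == y]| * g y.
Proof.
under [RHS]eq_bigr => y _ do rewrite cardsum big_distrl /=.
rewrite exchange_big /=; apply eq_bigr => x _.
rewrite (bigD1 (f x)) //= eqxx mul1n big1 ?addn0 // => y ne.
by rewrite eq_sym (negbTE ne).
Qed.

Lemma sumM (F : finFieldType) (f : F -> F) (h : nat -> nat) K :
  (forall r, K <= r -> h r = 0) ->
  \sum_(r < K) h r * Mr f r = \sum_y h #|[set x | f x == y]|.
Proof.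
move=> Hh.
have EM : forall r, Mr f r = \sum_y (#|[set x | f x == y]| == r : nat) by move=> r; rewrite /Mr cardsum.
under [LHS]eq_bigr => r _ do rewrite EM big_distrr /=.
rewrite exchange_big /=; apply eq_bigr => y _.
set n := #|[set x | f x == y]|.
case: (ltnP n K) => hn.
  rewrite (bigD1 (Ordinal hn)) //= eqxx muln1 big1 ?addn0 // => i ne.
  have -> : (n == i) = false.
    apply/negbTE; apply: contra ne => /eqP e; apply/eqP/val_inj => /=; by rewrite e.
  by rewrite muln0.
rewrite Hh // big1 // => i _.
have -> : (n == i) = false by apply/negbTE; rewrite neq_ltn; apply/orP; right; apply: leq_trans (ltn_ord i) hn.
by rewrite muln0.
Qed.

Lemma sumS (F : finFieldType) (f : F -> F) m :
  \sum_(1 <= r < m.+1) r * (m.+1 - r) * Mr f r =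
  \sum_y #|[set x | f x == y]| * (m.+1 - #|[set x | f x == y]|).
Proof.
have -> : \sum_(1 <= r < m.+1) r * (m.+1 - r) * Mr f r =
          \sum_(0 <= r < m.+1) r * (m.+1 - r) * Mr f r by rewrite (big_ltn (ltn0Sn m)).
rewrite big_mkord (@sumM F f (fun r => r * (m.+1 - r)) m.+1) // => r hr.
have -> : m.+1 - r = 0 by apply/eqP; rewrite subn_eq0.
by rewrite muln0.
Qed.

Lemma perY (n m : nat) : n * m <= n * (m - n) + n * n ?= iff (n <= m).
Proof.
split; first by case: (leqP n m) => h; nia.
case: (leqP n m) => h; apply/eqP; first nia.
move=> E; nia.
Qed.

Theorem theorem2p7 (F : finFieldType) (f : F -> F) (d : nat) :
  d = diff_unif f ->
  let q := #|F| in
  [/\ (d <= \sum_(1 <= r < d.+1) r * (d.+1 - r) * Mr f r)%N,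
      (q + d <= \sum_(1 <= r < d.+2) r * (d.+2 - r) * Mr f r)%N,
      ((\sum_(1 <= r < d.+1) r * (d.+1 - r) * Mr f r = d)%N <->
         (Nf f = d.+1 * q - d)%N /\ (forall r : nat, (d.+2 <= r)%N -> Mr f r = 0%N)) &
      ((\sum_(1 <= r < d.+2) r * (d.+2 - r) * Mr f r = q + d)%N <->
         (Nf f = d.+1 * q - d)%N /\ (forall r : nat, (d.+2 < r)%N -> Mr f r = 0%N)) /\
      ((\sum_(1 <= r < d.+2) r * (d.+2 - r) * Mr f r = q + d)%N ->
         (\sum_(1 <= r < d.+1) r * (d.+1 - r) * Mr f r = d.+2 * Mr f d.+2 + d)%N)].
Proof.
move=> Hd q.
set n := fun y => #|[set x | f x == y]|.
have hA : \sum_y n y = q.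
  have := sum_fib f (fun _ => 1); under [RHS]eq_bigr => y _ do rewrite muln1.
  by move=> <-; rewrite /q -sum1_card.
have hB : Nf f = \sum_y n y * n y.
  rewrite /Nf cardsum -(pair_big predT predT (fun x x' => (f x == f x' : nat))) /=.
  rewrite -(sum_fib f n); apply eq_bigr => x _.
  by rewrite /n cardsum; apply eq_bigr => x' _; rewrite eq_sym.
have hC : Nf f + d <= d.+1 * q.
  have hN : Nf f = \sum_(a : F) #|[set x | (f (x + a) - f x == 0)%R]|.
    rewrite /Nf cardsum -(pair_big predT predT (fun x x' => (f x == f x' : nat))) /=.
    rewrite (eq_bigr (fun x => \sum_a (f x == f (x + a)%R : nat))); last first.
      by move=> x _; rewrite (reindex_inj (@GRing.addrI _ x)).
    rewrite exchange_big /=; apply eq_bigr => a _; rewrite cardsum.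
    by apply eq_bigr => x _; rewrite GRing.subr_eq0 eq_sym.
  have le : forall a : F, #|[set x | (f (x + a) - f x == 0)%R]| <= (if a == 0%R then q else d).
    move=> a; case: eqP => [->|ne]; first by rewrite /q max_card.
    rewrite Hd /diff_unif.
    have H1 := @leq_bigmax F (fun b : F => #|[set x | (f (x + a) - f x == b)%R]|) 0%R.
    have H2 := @leq_bigmax_cond F (fun a0 : F => a0 != 0%R) (fun a0 : F => \max_b #|[set x | (f (x + a0) - f x == b)%R]|) a (introN eqP ne).
    exact (leq_trans H1 H2).
  rewrite hN.
  have Hs : \sum_(a : F) #|[set x | (f (x + a) - f x == 0)%R]| <= \sum_(a : F) (if a == 0%R then q else d).
    by apply: leq_sum => a _; exact: le.
  apply: leq_trans (leq_add Hs (leqnn d)) _.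
  rewrite (bigD1 0%R) //= eqxx.
  rewrite (eq_bigr (fun _ => d)); last by move=> a /negbTE ->.
  have : \sum_(a : F) d = q * d by rewrite sum_nat_const.
  rewrite (bigD1 0%R) //= => E.
  rewrite mulSn; lia.
have L1 := leqif_sum (fun y (_ : true) => perY (n y) d.+1).
have L2 := leqif_sum (fun y (_ : true) => perY (n y) d.+2).
rewrite -!big_distrl /= hA big_split /= -hB in L1.
rewrite -!big_distrl /= hA big_split /= -hB in L2.
pose S1 := \sum_y n y * (d.+1 - n y). pose S2 := \sum_y n y * (d.+2 - n y).
have eS1 : \sum_(1 <= r < d.+1) r * (d.+1 - r) * Mr f r = S1 by exact: sumS.
have eS2 : \sum_(1 <= r < d.+2) r * (d.+2 - r) * Mr f r = S2 by exact: sumS.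
rewrite eS1 eS2; rewrite -/S1 in L1; rewrite -/S2 in L2.
have Mz : forall m, (forall r, m < r -> Mr f r = 0) <-> (forall y, n y <= m).
  move=> m; split.
    move=> H y; rewrite leqNgt; apply/negP => lt.
    have := H _ lt; rewrite /Mr => /eqP; rewrite cards_eq0 => /eqP/setP/(_ y).
    by rewrite !inE eqxx.
  move=> H r lt; rewrite /Mr cardsum big1 // => y _.
  by have -> : (n y == r) = false by apply/negbTE; rewrite neq_ltn (leq_ltn_trans (H y) lt).
have fa : forall m, [forall (y | true), n y <= m] <-> (forall y, n y <= m).
  move=> m; split => [H y | H]; first exact: (implyP (forallP H y) isT).
  by apply/forallP => y; apply/implyP => _; exact: H.
case: L1 => L1a L1b; case: L2 => L2a L2b.
split.
- lia.
- lia.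
- split.
    move=> E.
    have E1 : q * d.+1 == S1 + Nf f by apply/eqP; lia.
    rewrite L1b in E1; move/fa: E1 => E1.
    split; first lia.
    by move=> r hr; apply (proj2 (Mz d.+1) E1).
  move=> [HN HM].
  have E1 : forall y, n y <= d.+1 by apply/(Mz d.+1).
  move/fa: E1; rewrite -L1b => /eqP; lia.
- split; first split.
    move=> E.
    have E1 : q * d.+2 == S2 + Nf f by apply/eqP; lia.
    rewrite L2b in E1; move/fa: E1 => E1.
    split; first lia.
    by move=> r hr; apply (proj2 (Mz d.+2) E1).
  move=> [HN HM].
  have E1 : forall y, n y <= d.+2 by apply/(Mz d.+2).
  move/fa: E1; rewrite -L2b => /eqP; lia.
  move=> E.
  have E1 : q * d.+2 == S2 + Nf f by apply/eqP; lia.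
  rewrite L2b in E1; move/fa: E1 => E1.
  have EN : Nf f + d = d.+1 * q by lia.
  have P : forall y, n y * (d.+1 - n y) + n y * n y = n y * d.+1 + (n y == d.+2) * d.+2.
    move=> y; have := E1 y; rewrite leq_eqVlt => /orP [/eqP ->|h].
      rewrite eqxx; nia.
    have -> : (n y == d.+2) = false by apply/negbTE; rewrite neq_ltn h.
    rewrite mul0n addn0; nia.
  have Q : \sum_y (n y * (d.+1 - n y) + n y * n y) = \sum_y (n y * d.+1 + (n y == d.+2) * d.+2).
    by apply: eq_bigr => y _; exact: P.
  rewrite big_split big_split /= -hB -big_distrl /= hA -big_distrl /= in Q.
  have EM : \sum_(i : F) (n i == d.+2 : nat) = Mr f d.+2 by rewrite /Mr cardsum.
  rewrite EM -/S1 in Q; clear -Q EN; nia.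
Qed.
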